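(* A space in the category $\mathsf{Top}_1$ of T$_1$-spaces and continuous maps is finitely generated (as an object of $\mathsf{Top}_1$) if, and only if, it is finite.
   Context: An object $X$ of a category $\mathcal{C}$ is finitely generated if for every directed diagram $(Z_i)_{i\in I}$ in $\mathcal{C}$ (indexed by a directed poset, i.e. every finite subset has an upper bound) all of whose connecting morphisms $z_{i,j}$ are monomorphisms, with colimit cocone $c_i:Z_i\to Z$ in $\mathcal{C}$, every morphism $f:X\to Z$ factorizes as $f=c_i\cdot g$ for some $i$ and $g:X\to Z_i$, and if also $f=c_i\cdot g'$ then $z_{i,j}\cdot g=z_{i,j}\cdot g'$ for some connecting morphism $z_{i,j}$. *)

(* Defs.v *)
From HB Require Import structures.
From mathcomp Require Import all_boot all_order.
From mathcomp Require Import all_classical topology.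
Set Implicit Arguments. Unset Strict Implicit. Unset Printing Implicit Defensive.
Local Open Scope classical_set_scope.

Definition T1space (T : topologicalType) : Prop := accessible_space T.

Definition directed_poset (I : Type) (le : I -> I -> Prop) : Prop :=
  [/\ (forall i, le i i),
      (forall i j k, le i j -> le j k -> le i k),
      (forall i j, le i j -> le j i -> i = j) &
      (forall F : set I, finite_set F -> exists u, forall i, F i -> le i u)].

Definition mono_Top1 (A B : topologicalType) (m : A -> B) : Prop :=
  forall (W : topologicalType) (g h : W -> A), T1space W ->
    continuous g -> continuous h -> m \o g = m \o h -> g = h.

Definition mono_directed_diagram (I : Type) (le : I -> I -> Prop)
  (Z : I -> topologicalType) (z : forall i j, le i j -> Z i -> Z j) : Prop :=
  directed_poset le /\ (forall i, T1space (Z i)) /\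
  [/\
      (forall i j (h : le i j), continuous (z i j h)),
      (forall i (h : le i i), z i i h = id),
      (forall i j k (hij : le i j) (hjk : le j k) (hik : le i k),
          z i k hik = z j k hjk \o z i j hij) &
      (forall i j (h : le i j), mono_Top1 (z i j h))].

Definition cocone (I : Type) (le : I -> I -> Prop)
  (Z : I -> topologicalType) (z : forall i j, le i j -> Z i -> Z j)
  (W : topologicalType) (d : forall i, Z i -> W) : Prop :=
  (forall i, continuous (d i)) /\
  (forall i j (h : le i j), d j \o z i j h = d i).

Definition colimit_Top1 (I : Type) (le : I -> I -> Prop)
  (Z : I -> topologicalType) (z : forall i j, le i j -> Z i -> Z j)
  (C : topologicalType) (c : forall i, Z i -> C) : Prop :=
  [/\ T1space C, cocone z c &
      forall (W : topologicalType) (d : forall i, Z i -> W),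
        T1space W -> cocone z d ->
        exists u : C -> W, [/\ continuous u, (forall i, u \o c i = d i) &
          forall v : C -> W, continuous v -> (forall i, v \o c i = d i) -> v = u]].

Definition finitely_generated_Top1 (X : topologicalType) : Prop :=
  forall (I : Type) (le : I -> I -> Prop) (Z : I -> topologicalType)
         (z : forall i j, le i j -> Z i -> Z j)
         (C : topologicalType) (c : forall i, Z i -> C),
    mono_directed_diagram z -> colimit_Top1 z c ->
    forall f : X -> C, continuous f ->
      (exists i (g : X -> Z i), continuous g /\ f = c i \o g) /\
      (forall i (g g' : X -> Z i), continuous g -> continuous g' ->
          f = c i \o g -> f = c i \o g' ->
          exists j (h : le i j), z i j h \o g = z i j h \o g').

(* Main.v *)
From HB Require Import structures.
Require Import Defs.
From mathcomp Require Import all_boot all_order.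
From mathcomp Require Import all_classical topology.
Set Implicit Arguments. Unset Strict Implicit. Unset Printing Implicit Defensive.
Local Open Scope classical_set_scope.

Definition cofin (T : Type) : Type := T.
HB.instance Definition _ T := gen_eqMixin (cofin T).
HB.instance Definition _ T := gen_choiceMixin (cofin T).
Definition cofin_op T : set_system (cofin T) := fun U => U = set0 \/ finite_set (~` U).
Lemma cofin_opT T : cofin_op [set: cofin T].
Proof. by right; rewrite setCT; exact: finite_set0. Qed.
Lemma cofin_opI T : setI_closed (@cofin_op T).
Proof.
move=> U V [->|hU]; first by left; rewrite set0I.
move=> [->|hV]; first by left; rewrite setI0.
by right; rewrite setCI finite_setU.
Qed.
Lemma cofin_opU T : forall (I : Type) (f : I -> set (cofin T)), (forall i, cofin_op (f i)) ->
    cofin_op (\bigcup_i f i).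
Proof.
move=> I f hf.
have [[i fi0]|h] := pselect (exists i, f i !=set0).
  case: (hf i) => [e|hfin]; first by move: fi0; rewrite e => -[].
  right; apply: sub_finite_set hfin => x + fx; apply.
  by exists i.
left; apply/seteqP; split=> // x [i _ fx]; exfalso; apply: h; exists i; by exists x.
Qed.
HB.instance Definition _ T := isOpenTopological.Build (cofin T) (@cofin_opT T) (@cofin_opI T) (@cofin_opU T).

Lemma cofin_openE T (U : set (cofin T)) : open U = cofin_op U.
Proof. by []. Qed.

Lemma cofin_T1 T : T1space (cofin T).
Proof.
move=> x y /eqP xy; exists (~` [set y]); split.
- by rewrite cofin_openE; right; rewrite setCK; exact: finite_set1.
- by rewrite inE => /= e; apply: xy.
- by rewrite inE /= => /(_ erefl).
Qed.

Lemma cofin_inj_cont (A : topologicalType) T (f : A -> cofin T) :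
  T1space A -> injective f -> continuous f.
Proof.
move=> hA finj; apply/continuousP => U; rewrite cofin_openE => -[->|hU].
  by rewrite preimage_set0; exact: open0.
rewrite -(setCK (f @^-1` U)) openC preimage_setC; apply: (proj1 accessible_finite_set_closed hA).
by apply: finite_preimage => // x y _ _; apply: finj.
Qed.

Lemma mono_inj (A B : topologicalType) (m : A -> B) : mono_Top1 m -> injective m.
Proof.
move=> hm a b e.
have ca : continuous (fun _ : cofin unit => a) by move=> ?; apply: cst_continuous.
have cb : continuous (fun _ : cofin unit => b) by move=> ?; apply: cst_continuous.
have := hm (cofin unit) (fun _ => a) (fun _ => b) (@cofin_T1 unit) ca cb.
move=> /(_ _) H.
have /H : m \o (fun _ : cofin unit => a) = m \o (fun _ => b) by apply: funext => _ /=; rewrite e.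
by move=> /(congr1 (fun h => h tt)).
Qed.

Lemma finite_all_cont (X Y : topologicalType) (g : X -> Y) :
  T1space X -> finite_set [set: X] -> continuous g.
Proof.
move=> hX hfin; apply/continuousP => A _.
rewrite -(setCK (g @^-1` A)) openC; apply: (proj1 accessible_finite_set_closed hX).
exact: sub_finite_set hfin.
Qed.

Lemma fin_fg (X : topologicalType) : T1space X -> finite_set [set: X] ->
  finitely_generated_Top1 X.
Proof.
move=> hX hfin I le Z z C c [[hrefl htrans hanti hub] [hZ1 [hzc hzid hzcomp hmono]]]
  [hC1 [hcc hcompat] huniv] f hf.
have zinj i j (h : le i j) : injective (z i j h) by apply: mono_inj; apply: hmono.
have hzc' i j k hij hjk hik x : z j k hjk (z i j hij x) = z i k hik x.
  by rewrite (hzcomp i j k hij hjk hik).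
have surj : forall p : C, exists i (a : Z i), c i a = p.
  move=> p; apply: contrapT => np.
  have hS : continuous (fun y : C => (Some y : cofin (option C))).
    by apply: cofin_inj_cont => // x y [].
  have hd : cocone z (fun i a => (Some (c i a) : cofin (option C))).
    split=> [i x|i j h]; first by apply: (continuous_comp (hcc i x) (hS _)).
    by apply: funext => a /=; rewrite -(hcompat i j h).
  have [u [_ _ uniq]] := huniv (cofin (option C)) _ (@cofin_T1 _) hd.
  have e1 := uniq _ hS (fun i => erefl).
  pose v2 : C -> cofin (option C) := fun y => if y == p then None else Some y.
  have hv2 : continuous v2.
    apply: cofin_inj_cont => // x y; rewrite /v2.
    by case: eqP => [->|xp]; case: eqP => [->|yp] // [].
  have e2 : v2 = u.
    apply: uniq => // i; apply: funext => a /=; rewrite /v2; case: ifP => // /eqP ca.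
    by exfalso; apply: np; exists i, a.
  have := congr1 (@^~ p) (etrans e2 (esym e1)); rewrite /v2 eqxx.
  by [].
have cinj : forall i (a b : Z i), c i a = c i b -> a = b.
  move=> i a b cab.
  pose cls j (w : Z j) : cofin (set {k : I & Z k}) := fun p =>
    exists m (h1 : le j m) (h2 : le (projT1 p) m), z j m h1 w = z (projT1 p) m h2 (projT2 p).
  have clsinj j : injective (cls j).
    move=> w w' e.
    have : cls j w' (existT _ j w') by exists j, (hrefl j), (hrefl j).
    rewrite -e => -[m [h1 [h2 /=]]].
    by rewrite (Prop_irrelevance h1 h2) => /zinj.
  have hd : cocone z cls.
    split=> [j|j k h]; first by apply: cofin_inj_cont => //; apply: clsinj.
    apply: funext => w /=; apply: funext => p; apply: propext; split.
      move=> [m [h1 [h2 e]]]; exists m, (htrans _ _ _ h h1), h2.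
      by rewrite -(hzc' _ _ _ h h1 (htrans _ _ _ h h1)).
    move=> [m [h1 [h2 e]]].
    have [M hM] := hub [set k; m] (finite_set2 _ _).
    have hkM : le k M by apply: hM; left.
    have hmM : le m M by apply: hM; right.
    exists M, hkM, (htrans _ _ _ h2 hmM).
    rewrite (hzc' _ _ _ h hkM (htrans _ _ _ h1 hmM)).
    rewrite -(hzc' _ _ _ h1 hmM (htrans _ _ _ h1 hmM)) e.
    by rewrite (hzc' _ _ _ h2 hmM (htrans _ _ _ h2 hmM)).
  have [u [_ uc _]] := huniv _ cls (@cofin_T1 _) hd.
  apply: (clsinj i).
  by rewrite -(uc i) /= cab.
split.
  have /choice [ix hix] : forall x, exists i, exists a : Z i, c i a = f x.
    by move=> x; apply: surj.
  pose ax x := projT1 (cid (hix x)).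
  have hax x : c (ix x) (ax x) = f x := projT2 (cid (hix x)).
  have [M hM] := hub (ix @` setT) (finite_image _ hfin).
  have hM' x : le (ix x) M by apply: hM; exists x.
  exists M, (fun x => z (ix x) M (hM' x) (ax x)); split.
    exact: finite_all_cont.
  apply: funext => x /=.
  by rewrite -[LHS](hax x) -(hcompat _ _ (hM' x)).
move=> i g g' _ _ -> e; exists i, (hrefl i).
apply: funext => x /=; congr (z i i _ _); apply: cinj.
exact: (congr1 (@^~ x) e).
Qed.

Lemma sig_inj (T : Type) (P : T -> Prop) (s t : {x : T | P x}) :
  proj1_sig s = proj1_sig t -> s = t.
Proof.
case: s t => [x hx] [y hy] /= exy; subst y; congr exist; exact: Prop_irrelevance.
Qed.

Lemma cofin_closedE T (A : set (cofin T)) : closed A -> A = setT \/ finite_set A.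
Proof.
rewrite -openC cofin_openE => -[h|h]; last by right; rewrite setCK in h.
by left; rewrite -(setCK A) h setC0.
Qed.

Section Dir2.
Variable X : topologicalType.
Hypothesis hX : T1space X.
Variable e : nat * nat -> X.
Hypothesis einj : injective e.

Definition col (S : set X) (a : nat) : set nat := [set b | S (e (a,b))].
Definition Jset (S : set X) : Prop := finite_set [set a | ~ finite_set (col S a)].
Definition Idx := {S : set X | Jset S}.
Definition leI (S T : Idx) := proj1_sig S `<=` proj1_sig T.
Definition Zt (S : Idx) : topologicalType := cofin {x : X | proj1_sig S x}.
Definition zt (S T : Idx) (h : leI S T) : Zt S -> Zt T :=
  fun s => exist _ (proj1_sig s) (h _ (proj2_sig s)).
Definition Ct : topologicalType := cofin X.
Definition ct (S : Idx) : Zt S -> Ct := fun s => proj1_sig s.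
Arguments zt : clear implicits.
Arguments ct : clear implicits.

Lemma J1 x : Jset [set x].
Proof.
rewrite /Jset; suff -> : [set a | ~ finite_set (col [set x] a)] = set0 by exact: finite_set0.
apply/seteqP; split=> // a /= ha; apply: ha.
have [[b0 hb0]|nb] := pselect (exists b, e (a, b) = x).
  apply: (@sub_finite_set _ _ [set b0]); last exact: finite_set1.
  move=> b /= hb; have := einj (etrans hb (esym hb0)); by case.
suff -> : col [set x] a = set0 by exact: finite_set0.
by apply/seteqP; split=> // b /= hb; apply: nb; exists b.
Qed.

Lemma J_big (F : set Idx) : finite_set F -> Jset (\bigcup_(i in F) proj1_sig i).
Proof.
move=> hF; rewrite /Jset.
apply: (@sub_finite_set _ _ (\bigcup_(i in F) [set a | ~ finite_set (col (proj1_sig i) a)])).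
  move=> a /= ha; apply: contrapT => hn; apply: ha.
  suff -> : col (\bigcup_(i in F) proj1_sig i) a = \bigcup_(i in F) col (proj1_sig i) a.
    apply: bigcup_finite => // i Fi; apply: contrapT => hi; apply: hn; by exists i.
  by apply/seteqP; split=> b /= [i Fi hb]; exists i.
apply: bigcup_finite => // i _; exact: (proj2_sig i).
Qed.

Lemma JU S T : Jset S -> Jset T -> Jset (S `|` T).
Proof.
move=> hS hT; rewrite /Jset.
apply: (@sub_finite_set _ _ ([set a | ~ finite_set (col S a)] `|` [set a | ~ finite_set (col T a)])); last by rewrite finite_setU.
move=> a /= ha; apply: contrapT => hn; apply: ha.
have -> : col (S `|` T) a = col S a `|` col T a by [].
rewrite finite_setU; split; apply: contrapT => h; apply: hn; [left|right]; exact: h.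
Qed.

Lemma notJT : ~ Jset setT.
Proof.
rewrite /Jset.
have -> : [set a | ~ finite_set (col setT a)] = setT.
  apply/seteqP; split=> // a _ /=.
  have -> : col setT a = setT by [].
  exact: infinite_nat.
exact: infinite_nat.
Qed.

Lemma tall (K : set X) : ~ finite_set K ->
  exists S, [/\ Jset S, S `<=` K & ~ finite_set S].
Proof.
move=> hK.
pose R := [set x | exists p, x = e p].
have [fin1|inf1] := pselect (finite_set (K `\` R)); last first.
  exists (K `\` R); split; [|by move=> x []|by []].
  rewrite /Jset; suff -> : [set a | ~ finite_set (col (K `\` R) a)] = set0 by exact: finite_set0.
  apply/seteqP; split=> // a /= ha; apply: ha.
  suff -> : col (K `\` R) a = set0 by exact: finite_set0.
  apply/seteqP; split=> // b /= [_ hb]; apply: hb; by exists (a, b).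
have inf2 : ~ finite_set (K `&` R).
  move=> h; apply: hK.
  apply: (@sub_finite_set _ _ ((K `\` R) `|` (K `&` R))); last by rewrite finite_setU.
  move=> x Kx; have [Rx|nRx] := pselect (R x); [right|left]; by split.
have [[a0 ha0]|hall] := pselect (exists a, ~ finite_set (col K a)).
  pose L := [set x | exists b, x = e (a0, b)].
  exists (K `&` L); split; [|by move=> x []|].
    rewrite /Jset; apply: (@sub_finite_set _ _ [set a0]); last exact: finite_set1.
    move=> a /= ha; apply: contrapT => na; apply: ha.
    suff -> : col (K `&` L) a = set0 by exact: finite_set0.
    apply/seteqP; split=> // b /= [_ [b' hb']]; have := einj hb'; case=> aa _.
    exact: na aa.
  move=> hfin; apply: ha0.
  apply: (@sub_finite_set _ _ ((fun b => e (a0, b)) @^-1` (K `&` L))).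
    by move=> b Kb; split => //; exists b.
  apply: finite_preimage => // b b' _ _ h; by case: (einj h).
exists (K `&` R); split; [|by move=> x []|by []].
rewrite /Jset; suff -> : [set a | ~ finite_set (col (K `&` R) a)] = set0 by exact: finite_set0.
apply/seteqP; split=> // a /= ha; apply: ha.
apply: (@sub_finite_set _ _ (col K a)); first by move=> b [].
apply: contrapT => h; apply: hall; by exists a.
Qed.

Lemma final_closed (K : set X) :
  (forall S : Idx, closed [set s : Zt S | K (proj1_sig s)]) -> finite_set K \/ K = setT.
Proof.
move=> hK; apply: contrapT => /not_orP [hinf hnT].
have [x0 nKx0] : exists x0, ~ K x0.
  apply: contrapT => h; apply: hnT; apply/seteqP; split=> // x _.
  by apply: contrapT => nx; apply: h; exists x.
have [S' [hJ hsub hinfS]] := tall hinf.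
pose S : Idx := exist _ (S' `|` [set x0]) (JU hJ (J1 x0)).
case: (cofin_closedE (hK S)) => [hT|hfin].
  have : [set s : Zt S | K (proj1_sig s)] (exist _ x0 (or_intror erefl)) by rewrite hT.
  by [].
apply: hinfS.
apply: (@sub_finite_set _ _ ((@proj1_sig _ _) @` [set s : Zt S | K (proj1_sig s)])).
  move=> x hx; exists (exist _ x (or_introl hx)) => //=; exact: hsub.
exact: finite_image.
Qed.

Definition sing (x : X) : Idx := exist _ [set x] (J1 x).

Lemma diag : mono_directed_diagram zt.
Proof.
split; [|split; first by move=> i; exact: cofin_T1].
  split.
  - by move=> i x.
  - by move=> i j k hij hjk x /hij /hjk.
  - move=> [S hS] [T hT] hST hTS; apply: sig_inj => /=.
    by apply/seteqP; split.
  - move=> F hF; exists (exist _ _ (J_big hF)) => i Fi x hx /=; by exists i.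
have ztinj i j (h : leI i j) : injective (zt i j h).
  by move=> s t /(congr1 (@proj1_sig _ _)) /= /sig_inj.
split.
- move=> i j h; apply: cofin_inj_cont; [exact: cofin_T1|exact: ztinj].
- by move=> i h; apply: funext => s; apply: sig_inj.
- by move=> i j k hij hjk hik; apply: funext => s; apply: sig_inj.
- move=> i j h W g g' _ _ _ hgg; apply: funext => w; apply: (ztinj _ _ h).
  exact: (congr1 (@^~ w) hgg).
Qed.

Lemma colim : colimit_Top1 zt ct.
Proof.
have ctinj i : injective (ct i) by move=> s t /sig_inj.
split.
- exact: cofin_T1.
- split=> [i|i j h]; last by apply: funext.
  apply: cofin_inj_cont; [exact: cofin_T1|exact: ctinj].
move=> W d hW [hdc hdcomp].
pose u (x : Ct) : W := d (sing x) (exist _ x erefl).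
have uc : forall i, u \o ct i = d i.
  move=> i; apply: funext => -[x hx] /=; rewrite /u.
  have h : leI (sing x) i by move=> y /= ->.
  rewrite -(hdcomp _ _ h) /=; congr (d i _); exact: sig_inj.
exists u; split => //; last first.
  move=> v _ hv; apply: funext => x.
  by rewrite /u -(hv (sing x)).
apply/continuousP => U oU.
rewrite cofin_openE.
have := @final_closed (~` (u @^-1` U)).
case.
- move=> i.
  have -> : [set s : Zt i | (~` (u @^-1` U)) (proj1_sig s)] = d i @^-1` (~` U).
    by apply/seteqP; split=> s /=; rewrite -(uc i).
  apply: preimage_closed; first by move=> s _; exact: hdc.
  exact: open_closedC.
- by move=> h; right.
- move=> h; left; rewrite -(setCK (u @^-1` U)) h; exact: setCT.
Qed.

Lemma dir2_contra : finitely_generated_Top1 X -> False.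
Proof.
move=> hfg.
have hf : continuous (fun x : X => (x : Ct)).
  apply: cofin_inj_cont => //.
have [[i [g [_ hg]]] _] := hfg _ _ _ _ _ _ diag colim _ hf.
apply: notJT.
have -> : setT = proj1_sig i.
  apply/seteqP; split=> // x _.
  have -> : x = proj1_sig (g x) by exact: (congr1 (@^~ x) hg).
  exact: proj2_sig.
exact: proj2_sig.
Qed.
End Dir2.

Definition ptd (T : Type) (x0 : T) : Type := T.
HB.instance Definition _ T x0 := gen_eqMixin (@ptd T x0).
HB.instance Definition _ T x0 := gen_choiceMixin (@ptd T x0).
HB.instance Definition _ T x0 := isPointed.Build (@ptd T x0) x0.

Lemma inf_inj (T : Type) : ~ finite_set [set: T] -> exists e : nat * nat -> T, injective e.
Proof.
move=> h; have [x0 _] := infinite_setN0 h.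
have hle : ([set: nat] #<= [set: ptd x0])%card by apply/infiniteP.
move/pcard_injP: hle => [f finj].
exists (fun p => f (pickle p)) => p q epq; apply: (pcan_inj (@pickleK _)); apply: finj => //; by rewrite in_setT.
Qed.

Theorem theorem6p6 (X : topologicalType) :
  T1space X ->
  (finitely_generated_Top1 X <-> finite_set [set: X]).
Proof.
move=> hX; split; last exact: fin_fg.
move=> hfg; apply: contrapT => hinf.
have [e einj] := inf_inj hinf.
exact: (dir2_contra hX einj hfg).
Qed.
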